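(* Consider a non-periodic $F$-orbit containing $(0,-1)$ and $(0,1)$, with $(0,1)=F^n(0,-1)$. Let $w=w_0\cdots w_{n-1}$ be the associated positive boundary word encoding the itinerary from $(0,-1)$ to $(0,1)$, and let its rank be $2m-1$. Then: <ol> <li>The reduced word $\underline w=w_1\cdots w_{n-1}$ is a palindrome consisting of $2m-1$ blocks: $$\underline w=a^{i_1}b^{i_2}a^{i_3}\cdots a^{i_m}\cdots a^{i_3}b^{i_2}a^{i_1}$$ (letters alternating, with $i_k\ge1$). Here the middle block is a power of $a$ if $m$ is odd and a power of $b$ if $m$ is even, and $i_m+2\sum_{k=1}^{m-1}i_k=n-1$.</li> <li>$n$ is odd and $i_m$ is even if and only if the boundary segment $(0,-1),F(0,-1),\dots,F^n(0,-1)$ meets $\mathrm{Fix}(R)$ exactly once. The intersection lies in $\mathrm{dom}(\mathrm M_a)$ (resp. $\mathrm{dom}(\mathrm M_b)$), in which case $m$ is odd (resp. even).</li> <li>$n$ is even and $i_m$ is odd if and only if the boundary segment meets $\mathrm{Fix}(F\circ R)$ exactly once. The intersection lies in $\mathrm{dom}(\mathrm M_a)$ if either $i_m=1$ and $m$ is even, or $i_m>1$ and $m$ is odd; it lies in $\mathrm{dom}(\mathrm M_b)$ if either $i_m=1$ and $m$ is odd, or $i_m>1$ and $m$ is even.</li> </ol>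
   Context: For real parameters $\mathrm a,\mathrm b$, the map $F:\mathbb R^2\to\mathbb R^2$ is $F(x,y)=(\mathrm a x-y,x)$ if $x>0$ or ($x=0$ and $y\le0$), and $F(x,y)=(\mathrm b x-y,x)$ otherwise. $\mathrm{dom}(\mathrm M_a)$ is the open right half-plane together with the negative $y$-axis, and $\mathrm{dom}(\mathrm M_b)$ is its complement. $R(x,y)=(y,x)$, so $F^{-1}=RFR$. $\mathrm{Fix}(R)=\{(x,x):x\in\mathbb R\}$ and $\mathrm{Fix}(F\circ R)=\{(\tfrac{\mathrm a}{2}y,y):y>0\}\cup\{(\tfrac{\mathrm b}2y,y):y\le0\}$. Boundary segment and word: for an orbit segment $z_0=(0,-1),z_1,\dots,z_n$ of $F$ with $z_n=(0,1)$, the word is $w=w_0\cdots w_{n-1}$ with $w_t=a$ if $z_t\in\mathrm{dom}(\mathrm M_a)$ and $b$ otherwise; it is positive because $w_0=a$. The rank of $w$ is $1+|w|_{ab}+|w|_{ba}$, where $|w|_u$ counts occurrences of the factor $u$; it equals the number of half-turns around the origin. *)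

(* Defs.v *)
From HB Require Import structures.
From mathcomp Require Import all_boot all_order all_algebra.
From mathcomp Require Import reals.
Set Implicit Arguments. Unset Strict Implicit. Unset Printing Implicit Defensive.
Import Order.TTheory GRing.Theory Num.Theory.
Local Open Scope ring_scope.

Inductive letter := La | Lb.

Definition letter_eqb (x y : letter) : bool :=
  match x, y with La, La | Lb, Lb => true | _, _ => false end.
Lemma letter_eqP : Equality.axiom letter_eqb.
Proof. by case; case; constructor. Qed.
HB.instance Definition _ := hasDecEq.Build letter letter_eqP.

Section Dynamics.
Variable R : realType.
Implicit Types (a b : R) (p : R * R).

(* dom(M_a): open right half-plane together with the (closed) negative y-axis
   {x = 0, y <= 0}; dom(M_b) is its complement. *)
Definition inDomA p : bool := (0 < p.1) || ((p.1 == 0) && (p.2 <= 0)).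

Definition F a b p : R * R :=
  if inDomA p then (a * p.1 - p.2, p.1) else (b * p.1 - p.2, p.1).

Definition Rrefl p : R * R := (p.2, p.1).

Definition inFixR p : bool := Rrefl p == p.
Definition inFixFR a b p : bool := F a b (Rrefl p) == p.

Definition z a b (t : nat) : R * R := iter t (F a b) (0, -1).

Definition letter_of p : letter := if inDomA p then La else Lb.

Definition bword a b (n : nat) : seq letter :=
  [seq letter_of (z a b t) | t <- iota 0 n].

End Dynamics.

Definition count_factor (u v : letter) (w : seq letter) : nat :=
  count (fun q : letter * letter => (q.1 == u) && (q.2 == v)) (zip w (behead w)).

Definition rank (w : seq letter) : nat :=
  (1 + count_factor La Lb w + count_factor Lb La w)%N.

Definition block_letter (k : nat) : letter := if odd k then Lb else La.

Definition alt_blocks (s : seq nat) : seq letter :=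
  flatten [seq nseq (nth 0%N s k) (block_letter k) | k <- iota 0 (size s)].

(* Main.v *)
Require Import Defs.
From HB Require Import structures.
From mathcomp Require Import all_boot all_order all_algebra.
From mathcomp Require Import reals zify ring lra.
Import Order.TTheory GRing.Theory Num.Theory.

Definition flip (x : letter) := if x is La then Lb else La.
Definition flipn (j : nat) x := if odd j then flip x else x.

Fixpoint ab (x : letter) (e : seq nat) : seq letter :=
  if e is k :: e' then nseq k x ++ ab (flip x) e' else [::].

Fixpoint chg (x : letter) (u : seq letter) : nat :=
  if u is y :: u' then ((x != y) + chg y u')%N else 0%N.

Fixpoint pref (x : letter) (u : seq letter) : nat :=
  if u is y :: u' then (if y == x then (pref x u').+1 else 0%N) else 0%N.

Lemma flipK x : flip (flip x) = x. Proof. by case: x. Qed.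
Lemma flipnS j x : flipn j.+1 x = flipn j (flip x).
Proof. by rewrite /flipn /=; case: (odd j); rewrite ?flipK. Qed.
Lemma flipnK j x : flipn j (flipn j x) = x.
Proof. by rewrite /flipn; case: (odd j); rewrite ?flipK. Qed.

Lemma alt_blocks_ab e : alt_blocks e = ab La e.
Proof.
rewrite /alt_blocks.
suff H : forall d e, flatten [seq nseq (nth 0%N e k) (block_letter (k + d)) | k <- iota 0 (size e)] = ab (flipn d La) e.
  by rewrite -(H 0%N); congr flatten; apply: eq_map => k; rewrite addn0.
move=> d {}e; elim: e d => [|k e IH] d //=.
rewrite add0n; congr (_ ++ _).
rewrite -(addn0 1%N) iotaDl -map_comp.
have -> : flip (flipn d La) = flipn d.+1 La by rewrite flipnS /flipn; case: (odd d).
rewrite -IH; congr flatten; apply: eq_map => j /=.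
by rewrite addnS.
Qed.

Lemma size_ab x e : size (ab x e) = sumn e.
Proof. by elim: e x => [|k e IH] x //=; rewrite size_cat size_nseq IH. Qed.

Lemma ab_rcons x e k : ab x (rcons e k) = ab x e ++ nseq k (flipn (size e) x).
Proof.
elim: e x => [|k' e IH] x /=; first by rewrite cats0.
by rewrite IH catA flipnS.
Qed.

Lemma rev_ab x e : rev (ab x e) = ab (flipn (size e).+1 x) (rev e).
Proof.
elim: e x => [|k e IH] x //=.
rewrite rev_cat IH rev_cons ab_rcons size_rev rev_nseq.
have E : flipn (size e).+2 x = flipn (size e) x by rewrite /flipn /= negbK.
by rewrite E flipnK flipnS flipK.
Qed.

Lemma pref_nseq x k v : pref x (nseq k x ++ v) = (k + pref x v)%N.
Proof. by elim: k => //= k ->; rewrite eqxx. Qed.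

Lemma pref_ab x r : all (fun k => 0 < k)%N r -> pref x (ab (flip x) r) = 0%N.
Proof. by case: r => [|[|k] r] //= _; case: x. Qed.

Lemma nseq_catI (x : letter) k A B : nseq k x ++ A = nseq k x ++ B -> A = B.
Proof. by elim: k => //= k IH [] /IH. Qed.

Lemma ab_inj x e e' : all (fun k => 0 < k)%N e -> all (fun k => 0 < k)%N e' ->
  ab x e = ab x e' -> e = e'.
Proof.
elim: e x e' => [|k e IH] x [|k' e'] //=.
- by case: k' => // k' /andP [].
- by case: k => // k /andP [].
move=> /andP [Hk He] /andP [Hk' He'] E.
have Ekk : k = k'.
  have := congr1 (pref x) E; rewrite !pref_nseq !pref_ab //.
  by rewrite !addn0.
subst k'; congr (_ :: _); apply: (IH (flip x)) => //.
exact: nseq_catI E.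
Qed.

Lemma ab_exists x u : exists e, [/\ all (fun k => 0 < k)%N e, ab x e = x :: u &
  size e = (chg x u).+1].
Proof.
elim: u x => [|y u IH] x; first by exists [:: 1%N].
have [e [He E S]] := IH y.
have [Exy|Nxy] := eqVneq x y.
  subst y.
  case: e He E S => [|k r] //= /andP [Hk Hr] E S.
  exists (k.+1 :: r); split => //=; first by rewrite E.
  by rewrite eqxx add0n.
exists (1%N :: e); split => //=.
  have -> : flip x = y by clear -Nxy; move: Nxy; case: x; case: y.
  by rewrite E.
by rewrite Nxy S.
Qed.

Lemma nth_ab x e j p : (j < size e)%N -> (sumn (take j e) <= p < sumn (take j.+1 e))%N ->
  nth La (ab x e) p = flipn j x.
Proof.
elim: e x j p => [|k e IH] x j p //=.
case: j => [|j] /=.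
  move=> _ Hp; rewrite nth_cat size_nseq.
  by rewrite take0 addn0 in Hp; rewrite Hp nth_nseq Hp.
move=> Hj /andP [H1 H2]; rewrite nth_cat size_nseq.
have -> : (p < k)%N = false by lia.
rewrite flipnS; apply: IH; first lia.
rewrite /= in H1 H2; apply/andP; split; lia.
Qed.

Lemma count_factor_chg x u :
  (count_factor La Lb (x :: u) + count_factor Lb La (x :: u))%N = chg x u.
Proof.
rewrite /count_factor /=.
elim: u x => [|y u IH] x //=.
rewrite -IH; case: x; case: y => /=; lia.
Qed.

Local Open Scope ring_scope.
Section Dyn.
Context (R : realType) (a b : R).

Lemma F_snd p : (F a b p).2 = p.1.
Proof. by rewrite /F; case: ifP. Qed.
Lemma F_fst p : (F a b p).1 = (if inDomA p then a else b) * p.1 - p.2.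
Proof. by rewrite /F; case: ifP. Qed.

Lemma inDomA_x {p : R * R} : p.1 != 0 -> inDomA p = (0 < p.1).
Proof. by rewrite /inDomA => /negbTE ->; rewrite andFb orbF. Qed.

Lemma pairE (p q : R * R) : p.1 = q.1 -> p.2 = q.2 -> p = q.
Proof. by case: p; case: q => ? ? ? ? /= -> ->. Qed.

Lemma F_inj : injective (F a b).
Proof.
move=> p q E.
have E1 : p.1 = q.1 by rewrite -F_snd E F_snd.
have := congr1 fst E; rewrite !F_fst -E1.
have [->|Nz] := eqVneq p.1 0.
  by rewrite !mulr0 !sub0r => /oppr_inj E2; apply: pairE.
rewrite (inDomA_x Nz) (@inDomA_x q); last by rewrite -E1.
rewrite -E1 => /addrI /oppr_inj E2; exact: pairE.
Qed.

Lemma FRF p : F a b (Rrefl (F a b p)) = Rrefl p.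
Proof.
have E : Rrefl (F a b p) = (p.1, (if inDomA p then a else b) * p.1 - p.2).
  by apply: pairE; rewrite /= ?F_snd ?F_fst.
rewrite E; apply: pairE; last by rewrite F_snd.
rewrite F_fst /=.
have [->|Nz] := eqVneq p.1 0; first by rewrite !mulr0 !sub0r opprK.
rewrite (inDomA_x Nz) (@inDomA_x (p.1, _)) //.
by rewrite opprB addrC subrK.
Qed.

Lemma RreflK (p : R * R) : Rrefl (Rrefl p) = p. Proof. by case: p. Qed.

Definition scale (c : R) (p : R * R) := (c * p.1, c * p.2).

Lemma inDomA_scale c p : 0 < c -> inDomA (scale c p) = inDomA p.
Proof.
move=> c0; rewrite /inDomA /scale /= pmulr_rgt0 // mulf_eq0 (gt_eqF c0) /=.
by rewrite pmulr_rle0.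
Qed.

Lemma F_scale c p : 0 < c -> F a b (scale c p) = scale c (F a b p).
Proof.
move=> c0; apply: pairE; rewrite /scale /=.
  by rewrite !F_fst /= inDomA_scale //; case: (inDomA p); ring.
by rewrite !F_snd.
Qed.

Lemma iter_scale c p k : 0 < c -> iter k (F a b) (scale c p) = scale c (iter k (F a b) p).
Proof. by move=> c0; elim: k => //= k ->; rewrite F_scale. Qed.

Lemma iter_inj k : injective (iter k (F a b)).
Proof. elim: k => [|k IH] p q //= /F_inj; exact: IH. Qed.

Lemma zS t : z a b t.+1 = F a b (z a b t). Proof. by []. Qed.

Lemma zD s k : z a b (k + s) = iter k (F a b) (z a b s).
Proof. by rewrite /z iterD. Qed.

Section Orbit.
Variable n : nat.
Hypothesis Hper : forall k : nat, (0 < k)%N -> z a b k != (0, -1).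
Hypothesis Hn : z a b n = (0, 1).

Lemma z_inj i j : z a b i = z a b j -> i = j.
Proof.
wlog Hij : i j / (i <= j)%N.
  by move=> W E; case/orP: (leq_total i j) => H; [exact: W | symmetry; exact: W].
move=> E; apply/eqP; rewrite eqn_leq Hij /=; apply/negP => Hlt.
have : z a b (j - i) = z a b 0.
  apply: (@iter_inj i); rewrite /z -!iterD addn0 (_ : (i + (j - i) = j)%N); last lia.
  by symmetry; exact: E.
move=> E'; have H := Hper (j - i)%N; rewrite E' in H; have : (0 < j - i)%N by lia.
by move/H; rewrite /z /= eqxx.
Qed.

Lemma n_ge2 : (2 <= n)%N.
Proof.
case: n Hn => [|[|n']] //=.
  by case=> /eqP; rewrite eq_sym -subr_eq0 opprK paddr_eq0 ?oner_eq0 ?ler01.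
rewrite /F /inDomA /= ltxx eqxx /= oppr_le0 ler01 /=.
by case; rewrite mulr0 sub0r opprK => /eqP; rewrite oner_eq0.
Qed.

Lemma z_np1 : z a b n.+1 = (-1, 0).
Proof.
rewrite zS Hn /F /inDomA /= ltxx eqxx /= ler10 /=.
by rewrite mulr0 sub0r.
Qed.

Lemma zsym k : (k <= n.+1)%N -> Rrefl (z a b (n.+1 - k)) = z a b k.
Proof.
elim: k => [|k IH] Hk; first by rewrite subn0 z_np1.
rewrite subSS zS -IH; last lia.
have -> : (n.+1 - k = (n - k).+1)%N by lia.
by rewrite zS FRF.
Qed.

Lemma zsym' t : (t <= n.+1)%N -> z a b (n.+1 - t) = Rrefl (z a b t).
Proof. by move=> H; rewrite -(@zsym t H) RreflK. Qed.

Lemma neg_axis s : (0 < s <= n)%N -> (z a b s).1 = 0 -> (z a b s).2 < 0 -> False.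
Proof.
move=> Hs H1 H2.
set c := - (z a b s).2.
have c0 : 0 < c by rewrite oppr_gt0.
have Es : z a b s = scale c (0, -1).
  by apply: pairE; rewrite /scale /= ?mulr0 ?H1 // /c mulrN1 opprK.
have Ens : z a b (n - s) = (0, c).
  have -> : (n - s = n.+1 - s.+1)%N by lia.
  rewrite zsym'; last lia.
  rewrite zS Es /F /inDomA /scale /= !mulr0 eqxx /= mulrN1 oppr_le0 (ltW c0) /=.
  by rewrite orbT /Rrefl /= sub0r opprK.
have := zD s (n - s); rewrite subnK; last lia.
rewrite Es iter_scale // -/(z a b (n - s)) Ens Hn /scale /= mulr0 => [[]] Ec.
have c1 : c = 1.
  have : (c - 1) * (c + 1) = 0.
    by transitivity (c * c - 1); [ring | rewrite -Ec subrr].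
  move/eqP; rewrite mulf_eq0 subr_eq0 => /orP [/eqP //|].
  by rewrite addr_eq0 => /eqP E; move: c0; rewrite E oppr_gt0 ltr10.
have : z a b s = z a b 0 by rewrite Es c1 /scale /= !mul1r.
move/z_inj => E0; lia.
Qed.

Lemma no_axis s : (0 < s < n)%N -> (z a b s).1 != 0.
Proof.
move=> Hs; apply/negP => /eqP H1.
have [H2|H2|H2] := ltgtP (z a b s).2 0.
- apply: (@neg_axis s) => //; lia.
- have Ens : z a b (n - s) = (0, - (z a b s).2).
    have -> : (n - s = n.+1 - s.+1)%N by lia.
    rewrite zsym'; last lia.
    rewrite zS /F /inDomA H1 ltxx eqxx /= leNgt H2 /=.
    by rewrite mulr0 sub0r.
  apply: (@neg_axis (n - s)%N); rewrite ?Ens //=; first lia.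
  by rewrite oppr_lt0.
- have : z a b s.+1 = z a b s.
    rewrite zS; apply: pairE; first by rewrite F_fst H1 H2 mulr0 subr0.
    by rewrite F_snd H1 H2.
  move/z_inj; lia.
Qed.

Lemma letter_sym s : (0 < s < n)%N -> letter_of (z a b (n - s)) = letter_of (z a b s).
Proof.
move=> Hs.
have -> : (n - s = n.+1 - s.+1)%N by lia.
rewrite zsym'; last lia.
have Nz := @no_axis s Hs.
rewrite /letter_of zS (inDomA_x Nz) (@inDomA_x (Rrefl _)) /Rrefl /= F_snd //.
Qed.

Lemma fixR t : (t <= n)%N -> inFixR (z a b t) = (t + t == n.+1)%N.
Proof.
move=> Ht; rewrite /inFixR -zsym'; last lia.
apply/eqP/eqP => [/z_inj|E]; first lia.
by congr z; lia.
Qed.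

Lemma fixFR t : (t <= n)%N -> inFixFR a b (z a b t) = (t + t == n.+2)%N.
Proof.
move=> Ht; rewrite /inFixFR -zsym'; last lia.
rewrite -zS.
apply/eqP/eqP => [/z_inj|E]; first lia.
by congr z; lia.
Qed.

End Orbit.
End Dyn.
Arguments n_ge2 {R a b n}.
Arguments z_np1 {R a b n}.
Arguments zsym' {R a b n}.
Arguments z_inj {R a b}.
Arguments letter_sym {R a b n}.
Arguments fixR {R a b n}.
Arguments fixFR {R a b n}.

Lemma count_dbl K N : count (fun t => t + t == K)%N (iota 0 N) = (~~ odd K && (K < N + N))%N.
Proof.
elim: N => [|N IH]; first by rewrite /= andbF.
rewrite -addn1 iotaD count_cat IH /= addn0 add0n.
have [E|NE] := eqVneq (N + N)%N K.
  subst K; rewrite addnn odd_double /=; lia.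
rewrite /=; case Ho: (odd K) => /=; first by rewrite addn0.
have NE1 : K != (N + N).+1 by apply/eqP => E; move: Ho; rewrite E /= oddD addbb.
rewrite addn0; congr nat_of_bool.
apply/idP/idP => H; first lia.
move: NE NE1 => /eqP NE /eqP NE1; lia.
Qed.

Lemma take_pos (s : seq nat) j : all (fun k => 0 < k)%N s -> (j <= size s)%N ->
  (j <= sumn (take j s))%N.
Proof.
elim: s j => [|k s IH] [|j] //= /andP [Hk Hs] Hj.
have := IH j Hs Hj; lia.
Qed.

Lemma letter_flip (R : realType) (p : R * R) j : letter_of p = flipn j La -> inDomA p = ~~ odd j.
Proof. by rewrite /letter_of /flipn; case: (inDomA p); case: (odd j). Qed.
Theorem mainTheorem4 (R : realType) (a b : R) (n m : nat) :
  (* the F-orbit of (0,-1) is not periodic *)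
  (forall k : nat, (0 < k)%N -> z a b k != (0, -1)) ->
  (* (0,1) = F^n(0,-1) *)
  z a b n = (0, 1) ->
  (* rank of the boundary word is 2m-1 *)
  (rank (bword a b n)).+1 = (2 * m)%N ->
  exists i : seq nat,
    let im := nth 0%N i m.-1 in
    let uw := behead (bword a b n) in
    let nFixR := count (fun t => inFixR (z a b t)) (iota 0 n.+1) in
    let nFixFR := count (fun t => inFixFR a b (z a b t)) (iota 0 n.+1) in
    [/\
     (* Part 1 *)
     [/\ size i = m, all (fun k => 0 < k)%N i,
         rev uw = uw /\ uw = alt_blocks (i ++ rev (take m.-1 i)),
         block_letter m.-1 = (if odd m then La else Lb)
       & (im + 2 * sumn (take m.-1 i))%N = n.-1],
     (* Part 2 *)
     ((odd n && ~~ odd im) = (nFixR == 1%N)) /\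
     (forall t : nat, (t <= n)%N -> nFixR = 1%N -> inFixR (z a b t) ->
        (inDomA (z a b t) -> odd m) /\ (~~ inDomA (z a b t) -> ~~ odd m))
   & (* Part 3 *)
     ((~~ odd n && odd im) = (nFixFR == 1%N)) /\
     (forall t : nat, (t <= n)%N -> nFixFR = 1%N -> inFixFR a b (z a b t) ->
        ((((im == 1%N) && ~~ odd m) || ((1 < im)%N && odd m)) -> inDomA (z a b t)) /\
        ((((im == 1%N) && odd m) || ((1 < im)%N && ~~ odd m)) -> ~~ inDomA (z a b t)))].
Proof.
move=> Hper Hn Hrank.
have n2 := n_ge2 Hn.
set f := fun t => letter_of (z a b t).
set uw := behead (bword a b n).
have Huw : uw = map f (iota 1 n.-1) by rewrite /uw /bword; case: (n) n2.
have szuw : size uw = n.-1 by rewrite Huw size_map size_iota.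
have nth_uw : forall j, (j < n.-1)%N -> nth La uw j = f j.+1.
  by move=> j Hj; rewrite Huw (nth_map 0%N) ?size_iota // nth_iota // add1n.
have z1 : z a b 1 = (1, 0).
  by rewrite /z /= /F /inDomA /= ltxx eqxx /= oppr_le0 ler01 /= mulr0 sub0r opprK.
have f1 : f 1%N = La by rewrite /f z1 /letter_of /inDomA /= ltr01.
have Hbw2 : bword a b n = La :: uw.
  rewrite /uw /bword; case: (n) n2 => [|n'] //= _.
  by rewrite /letter_of /z /= /inDomA /= ltxx eqxx /= oppr_le0 ler01.
have uw_cons : uw = La :: behead uw.
  case E: uw => [|x s]; first by move: szuw; rewrite E /=; lia.
  have := nth_uw 0%N; rewrite E /= f1 => ->; last lia. done.
have Hpal : rev uw = uw.
  apply: (@eq_from_nth _ La); first by rewrite size_rev.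
  move=> j; rewrite size_rev szuw => Hj; rewrite nth_rev ?szuw // !nth_uw; try lia.
  rewrite (_ : (n.-1 - j.+1).+1 = n - j.+1)%N; last lia.
  apply: (letter_sym Hper Hn); lia.
have [e [He Eab Se]] := ab_exists La (behead uw).
have Euw : uw = ab La e by rewrite Eab -uw_cons.
have Hse : (size e).+1 = (2 * m)%N.
  rewrite -Hrank Se /rank Hbw2 -addnA count_factor_chg uw_cons /= add1n.
  by rewrite add0n.
have Hm : (1 <= m)%N by lia.
have Hepal : rev e = e.
  apply: (ab_inj La) => //; rewrite ?all_rev //; rewrite ?all_rev //.
  have Ef : flipn (size e).+1 La = La.
    by rewrite /flipn Hse oddM.
  by rewrite -{1}Ef -rev_ab -Euw Hpal.
have pos : forall j, (j < size e)%N -> (0 < nth 0%N e j)%N.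
  by move=> j Hj; move/all_nthP: He; apply.
have Hsz : size e = (2 * m - 1)%N by lia.
set S := sumn (take m.-1 e).
set im0 := nth 0%N e m.-1.
have Htm : take m e = rcons (take m.-1 e) im0.
  by rewrite -(take_nth 0%N); [rewrite prednK | lia].
have Hdrop : drop m e = rev (take m.-1 e).
  apply: (@eq_from_nth _ 0%N); first by rewrite size_drop size_rev size_takel; lia.
  move=> j; rewrite size_drop => Hj; rewrite nth_drop nth_rev; last by rewrite size_takel; lia.
  rewrite nth_take size_takel; try lia.
  rewrite -{1}Hepal nth_rev; last lia.
  congr nth; lia.
have Hsum : (im0 + 2 * S)%N = n.-1.
  rewrite -szuw Euw size_ab -(cat_take_drop m e) sumn_cat Hdrop sumn_rev Htm sumn_rcons.
  rewrite -/S; lia.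
have im_pos : (0 < im0)%N by apply: pos; lia.
have S_ge : (m.-1 <= S)%N by apply: take_pos => //; lia.
have Hpar : odd n = ~~ odd im0.
  by rewrite -(prednK (ltnW n2)) /= -Hsum oddD oddM /= addbF.
have let_t : forall t, (0 < t < n)%N -> letter_of (z a b t) = nth La (ab La e) t.-1.
  move=> t Ht; rewrite -Euw nth_uw; last lia.
  by rewrite prednK //; lia.
have mid : forall t, (0 < t < n)%N -> (S <= t.-1 < S + im0)%N -> inDomA (z a b t) = odd m.
  move=> t Ht Hb; rewrite (@letter_flip _ _ m.-1) ?(negbK, oddS) //.
  - by case: (m) Hm.
  rewrite let_t //; apply: nth_ab; first lia.
  by rewrite (prednK Hm) Htm sumn_rcons.
exists (take m e); cbv zeta.
have im_eq : nth 0%N (take m e) m.-1 = im0 by rewrite nth_take //; lia.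
have tt_eq : take m.-1 (take m e) = take m.-1 e by rewrite take_takel //; lia.
rewrite im_eq tt_eq.
have cR : count (fun t => inFixR (z a b t)) (iota 0 n.+1) = odd n.
  rewrite (@eq_in_count _ _ (fun t => t + t == n.+1)%N).
    by rewrite count_dbl oddS negbK (_ : (n.+1 < n.+1 + n.+1)%N = true) ?andbT //; lia.
  by move=> t; rewrite mem_iota => Ht; apply: (fixR Hper Hn); lia.
have cFR : count (fun t => inFixFR a b (z a b t)) (iota 0 n.+1) = ~~ odd n.
  rewrite (@eq_in_count _ _ (fun t => t + t == n.+2)%N).
    by rewrite count_dbl !oddS !negbK (_ : (n.+2 < n.+1 + n.+1)%N = true) ?andbT //; lia.
  by move=> t; rewrite mem_iota => Ht; apply: (fixFR Hper Hn); lia.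
rewrite cR cFR.
split.
- split => //.
  + by rewrite size_takel; lia.
  + by move: He; rewrite -{1}(cat_take_drop m e) all_cat => /andP [] .
  + split => //; rewrite alt_blocks_ab Euw; congr ab.
    by rewrite -Hdrop cat_take_drop.
  + by rewrite /block_letter; case: (m) Hm => //= m' _; case: (odd m').
- split; first by rewrite Hpar andbb; case: (~~ odd im0).
  move=> t Ht Hodd /=; rewrite (fixR Hper Hn) // => /eqP Htt.
  have Hin : inDomA (z a b t) = odd m.
    apply: mid; first lia.
    move: Hodd; rewrite Hpar; case: (odd im0) => //= _.
    apply/andP; split; lia.
  by rewrite Hin; split => // ->.
- split; first by rewrite Hpar negbK andbb; case: (odd im0).
  move=> t Ht Hev /=; rewrite (fixFR Hper Hn) // => /eqP Htt.
  have Hevn : ~~ odd n by move: Hev; case: (odd n).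
  have Himo : odd im0 by rewrite -[odd im0]negbK -Hpar.
  have [Hlt|Hgt|Heq] := ltngtP im0 1.
  - lia.
  - have Hin : inDomA (z a b t) = odd m.
      apply: mid; first (apply/andP; split; lia).
      apply/andP; split; lia.
    rewrite Hin; by case: (odd m).
  - rewrite /= ?orbF.
    have [Hm1|Hm2] := eqVneq m 1%N.
      have HS : S = 0%N by rewrite /S Hm1 take0.
      have Htn : t = n by move: Hsum Htt n2; rewrite Heq HS; clear; lia.
      rewrite Htn Hn Hm1 /= /inDomA /= ltxx eqxx /= ler10.
      by split.
    have Hin : inDomA (z a b t) = ~~ odd m.
      apply: letter_flip; rewrite let_t; last (apply/andP; split; lia).
      apply: nth_ab; first lia.
      rewrite (take_nth 0%N); last lia.
      rewrite sumn_rcons Htm sumn_rcons -/S -/im0 Heq.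
      have := pos m; move=> /(_ ltac:(lia)) => Hp.
      apply/andP; split; lia.
    by rewrite Hin; case: (odd m).
Qed.
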